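(* For every integer $k \geq 3$ there exists an instance $H=(V,E,C,\ell)$ of \textsc{MinECC} with $k$ colors, all edge weights equal to $1$, and rank $r = k-1$ (so $k = r+1$), such that the optimal \textsc{MinECC} value (minimum number of mistakes over all node colorings) is $k-1 = r$, while the optimal value of the \textsc{MinECC} LP relaxation on $H$ is $\frac{k}{2} = \frac{r+1}{2}$. Consequently the integrality gap of the \textsc{MinECC} LP relaxation is at least $2\left(1-\frac1k\right) = 2\left(1-\frac{1}{r+1}\right)$.
   Context: An edge-colored hypergraph is $H=(V,E,C,\ell)$ with finite node set $V$, a multiset $E$ of nonempty subsets of $V$ (edges), a color set $C=[k]=\{1,\dots,k\}$, a map $\ell\colon E\to C$, and weights $w_e\ge 0$ for $e\in E$. The rank $r$ is $\max_{e\in E}|e|$. A node coloring is a map $Y\colon V\to C$; it makes a mistake at $e$ (written $e\in\mathcal M_Y$) if some $v\in e$ has $Y[v]\neq \ell(e)$. The \textsc{MinECC} problem is to minimize $\sum_{e\in E} w_e \mathbb 1[e\in\mathcal M_Y]$ over all $Y$. The \textsc{MinECC} LP relaxation has variables $x_v^i$ ($v\in V$, $i\in C$) and $x_e$ ($e\in E$) and is: minimize $\sum_{e\in E} w_e x_e$ subject to $\sum_{i=1}^k x_v^i = k-1$ for all $v\in V$; $x_e \ge x_v^{\ell(e)}$ for all $e\in E$ and $v\in e$; $0\le x_v^i\le 1$; $0\le x_e\le 1$. *)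

(* Defs.v *)
From mathcomp Require Import all_boot all_order all_algebra.
Set Implicit Arguments. Unset Strict Implicit. Unset Printing Implicit Defensive.
Import Order.TTheory GRing.Theory Num.Theory.
Local Open Scope ring_scope.

(* An edge-colored hypergraph with k colors: node set V (finite type), edges
   indexed by a finite type E (so E is a multiset of node subsets),
   edge e : {set V}, color map lab : E -> 'I_k (colors [k] = {0,...,k-1}),
   weights w : E -> R. *)

Section MinECC.
Variables (R : realFieldType) (V E : finType) (k : nat).
Variables (edge : E -> {set V}) (lab : E -> 'I_k) (w : E -> R).

Definition ecc_wf : Prop := (forall e, edge e != set0) /\ (forall e, 0 <= w e).

Definition ecc_rank : nat := (\max_(e : E) #|edge e|)%N.

Definition mistake (Y : V -> 'I_k) (e : E) : bool :=
  [exists v in edge e, Y v != lab e].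

Definition ecc_cost (Y : V -> 'I_k) : R := \sum_(e | mistake Y e) w e.

Definition ecc_opt (m : R) : Prop :=
  (exists Y : V -> 'I_k, ecc_cost Y = m) /\ (forall Y : V -> 'I_k, m <= ecc_cost Y).

Definition lp_feasible (xv : V -> 'I_k -> R) (xe : E -> R) : Prop :=
  [/\ forall v, \sum_(i < k) xv v i = (k.-1)%:R,
      forall e v, v \in edge e -> xv v (lab e) <= xe e,
      forall v i, 0 <= xv v i /\ xv v i <= 1
    & forall e, 0 <= xe e /\ xe e <= 1].

Definition lp_obj (xe : E -> R) : R := \sum_(e : E) w e * xe e.

Definition lp_opt (m : R) : Prop :=
  (exists xv xe, lp_feasible xv xe /\ lp_obj xe = m) /\
  (forall xv xe, lp_feasible xv xe -> m <= lp_obj xe).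

End MinECC.

(* Main.v *)
Require Import Defs.
From mathcomp Require Import all_boot all_order all_algebra.
From mathcomp Require Import ring lra zify.
Set Implicit Arguments. Unset Strict Implicit. Unset Printing Implicit Defensive.
Import Order.TTheory GRing.Theory Num.Theory.
Local Open Scope ring_scope.

Section Inst.
Variable n : nat.
Local Notation k := n.+3.

Definition Vt := {A : {set 'I_k} | #|A| == 2%N}.

Lemma c2 (a b : 'I_k) : a != b -> #|[set a; b]| == 2%N.
Proof. by move=> h; rewrite cards2 h. Qed.

Lemma om : (ord0 : 'I_k) != ord_max. Proof. by rewrite -(inj_eq val_inj). Qed.
Definition v0 : Vt := exist _ [set ord0; ord_max] (c2 om).

Definition gi (i j : 'I_k) : Vt := insubd v0 [set i; j].

Lemma val_gi i j : i != j -> val (gi i j) = [set i; j].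
Proof. by move=> h; rewrite /gi insubdK //; apply: c2. Qed.

Definition edgeI (i : 'I_k) : {set Vt} := [set v : Vt | i \in val v].

Lemma mem_val (i : 'I_k) (v : Vt) : i \in val v -> exists2 j, j != i & val v = [set i; j].
Proof.
case: v => A /= /cards2P [x [y [xy ->]]].
rewrite !inE => /orP [] /eqP ->.
  by exists y; rewrite // eq_sym.
by exists x => //; rewrite setUC.
Qed.

Lemma card_edgeI i : #|edgeI i| = n.+2.
Proof.
have -> : edgeI i = [set gi i j | j in [set~ i]].
  apply/setP => v; rewrite inE; apply/idP/imsetP.
    move=> /mem_val [j ji hv]; exists j; first by rewrite !inE.
    by apply: val_inj; rewrite val_gi // eq_sym.
  case=> j; rewrite !inE => ji ->; rewrite val_gi ?(eq_sym i) // !inE eqxx.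
  done.
rewrite card_in_imset ?cardsC1 ?card_ord //.
move=> a b; rewrite !inE => ai bi /(congr1 val).
rewrite !val_gi ?(eq_sym i) // => /setP /(_ a); rewrite !inE eqxx (negbTE ai) /=.
by move=> /esym /eqP.
Qed.

Lemma ordS_neq (i : 'I_k) : ordS i != i.
Proof.
apply/eqP => /(congr1 val) /=.
case: i => m /= hm.
have [e|ne] := eqVneq m.+1 k.
  by rewrite e modnn => h; move: e; rewrite -h.
rewrite modn_small; last by rewrite ltn_neqAle ne hm.
by move=> /eqP; rewrite (gtn_eqF (ltnSn m)).
Qed.

Lemma rest_sum (R : realFieldType) (a b : 'I_k) : b != a ->
  \sum_(i | (i != a) && (i != b)) (1 : R) = k%:R - 2.
Proof.
move=> ba.
have : \sum_(i < k) (1 : R) = k%:R by rewrite sumr_const card_ord.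
rewrite (bigD1 a) //= (bigD1 b) //=.
move=> h; rewrite -h; ring.
Qed.

End Inst.

Theorem lemma1 : forall k : nat, (3 <= k)%N ->
  exists (V E : finType) (edge : E -> {set V}) (lab : E -> 'I_k),
    ecc_rank edge = k.-1 /\
    forall R : realFieldType,
      let w := fun _ : E => (1 : R) in
      [/\ ecc_wf edge w,
          ecc_opt edge lab w (k.-1)%:R,
          lp_opt edge lab w (k%:R / 2)
        & (k.-1)%:R / (k%:R / 2) = 2 * (1 - k%:R^-1) :> R].
Proof.
case=> [|[|[|n]]] // _.
exists (Vt n), 'I_n.+3, (@edgeI n), id; split.
  apply/eqP; rewrite eqn_leq; apply/andP; split.
    by apply/bigmax_leqP => i _; rewrite card_edgeI.
  by have := leq_bigmax (F := fun i : 'I_n.+3 => #|@edgeI n i|) ord0; rewrite card_edgeI.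
move=> R w.
have kn0 : (n.+3)%:R != 0 :> R by rewrite pnatr_eq0.
split.
- split=> [e|e]; last by rewrite /w ler01.
  by rewrite -card_gt0 card_edgeI.
- have costE : forall Y, ecc_cost (@edgeI n) id w Y = (#|[pred e | mistake (@edgeI n) id Y e]|)%:R.
    move=> Y; rewrite /ecc_cost /w -sum1_card natr_sum; apply: eq_bigl => e.
    by rewrite inE.
  split.
    exists (fun _ => ord0); rewrite costE.
    rewrite (@eq_card _ _ [set~ ord0]); first by rewrite cardsC1 card_ord.
      move=> e; rewrite !inE /mistake; apply/existsP/idP.
        by case=> v /andP [_]; rewrite eq_sym.
      move=> e0; exists (gi ord0 e); rewrite eq_sym e0 andbT inE val_gi 1?eq_sym //.
      by rewrite !inE eqxx orbT.
  move=> Y; rewrite costE ler_nat /=.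
  set P := [pred e | mistake (@edgeI n) id Y e].
  have hC : (#|[predC P]| <= 1)%N.
    apply/card_le1_eqP => a b; rewrite !inE /mistake /= => ha hb.
    move/exists_inPn: ha => ha; move/exists_inPn: hb => hb.
    apply/eqP; apply: contraT => ba.
    have ab : a != b by rewrite eq_sym.
    have ga : gi a b \in edgeI a by rewrite inE val_gi // !inE eqxx.
    have gb : gi a b \in edgeI b by rewrite inE val_gi // !inE eqxx orbT.
    move: (ha _ ga) (hb _ gb); rewrite !negbK => /eqP -> /eqP.
    by move=> h; move: ab; rewrite h eqxx.
  have := cardC P; rewrite card_ord => hk.
  by move: hk hC; move: #|P| #|[predC P]| => x y; lia.
- split.
  + exists (fun (v : Vt n) (i : 'I_n.+3) => if i \in val v then (2^-1 : R) else 1), (fun _ => (2^-1 : R)); split.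
      split.
      * move=> v; have := valP v => /cards2P [a [b [ab hv]]].
        rewrite (bigD1 a) //= (bigD1 b) 1?eq_sym //= hv !inE !eqxx orbT /=.
        rewrite (eq_bigr (fun _ => 1)); last first.
          by move=> i /andP [ia ib]; rewrite !inE (negbTE ia) (negbTE ib).
        rewrite rest_sum 1?eq_sym //= -[(n.+2)%:R]/((n.+2)%:R : R).
        rewrite -[n.+3]addn1 natrD; by field.
      * by move=> e v; rewrite inE => ->.
      * by move=> v i; case: ifP => _; split; lra.
      * by move=> e; split; lra.
    rewrite /lp_obj /w.
    rewrite (eq_bigr (fun _ => 2^-1)); last by move=> i _; rewrite mul1r.
    by rewrite sumr_const card_ord -[LHS]mulr_natr mulrC.
  + move=> xv xe [hs he hb hbe].
    have key : forall a b : 'I_n.+3, a != b -> 1 <= xe a + xe b.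
      move=> a b ab.
      have ga : gi a b \in edgeI a by rewrite inE val_gi // !inE eqxx.
      have gb : gi a b \in edgeI b by rewrite inE val_gi // !inE eqxx orbT.
      have h1 := he a _ ga.
      have h2 := he b _ gb.
      have := hs (gi a b).
      rewrite (bigD1 a) //= (bigD1 b) 1?eq_sym //=.
      have : \sum_(i | (i != a) && (i != b)) xv (gi a b) i <= \sum_(i | (i != a) && (i != b)) (1:R).
        by apply: ler_sum => i _; case: (hb (gi a b) i).
      rewrite rest_sum 1?eq_sym // => h3 h4.
      have e3 : (n.+3)%:R = (n.+2)%:R + 1 :> R by rewrite -[n.+3]addn1 natrD.
      lra.
    rewrite /lp_obj /w.
    under eq_bigr do rewrite mul1r.
    have : \sum_(i < n.+3) (1:R) <= \sum_(i < n.+3) (xe i + xe (ordS i)).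
      by apply: ler_sum => i _; apply: key; rewrite eq_sym ordS_neq.
    rewrite big_split /=.
    have -> : \sum_(i < n.+3) xe (ordS i) = \sum_(i < n.+3) xe i.
      by symmetry; exact: (reindex_inj (@ordS_inj _)).
    rewrite sumr_const card_ord => h; lra.
- rewrite -[(n.+3).-1]/(n.+2) -[n.+3]addn1 natrD.
  have k0 : (n.+2)%:R + 1 != 0 :> R.
    by rewrite gt_eqF //; have := ler0n R n.+2; lra.
  field.
  by rewrite gt_eqF //; have := ler0n R n; lra.
Qed.
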